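(* The group $G=\mathrm{SL}_3(\mathbb F_2)$ realizes $\langle 8,7,7\rangle$ via a TPP triple of subgroups, and consequently $\beta(\mathrm{SL}_3(\mathbb F_2))\ge 392=\frac{7}{3}|\mathrm{SL}_3(\mathbb F_2)|$.
   Context: For a nonempty subset $X$ of a group $G$, $Q(X):=\{xy^{-1}: x,y\in X\}$. Nonempty subsets $S_1,S_2,S_3$ of $G$ satisfy the Triple Product Property (TPP) if for all $s_i\in Q(S_i)$: $s_1s_2s_3=1$ iff $s_1=s_2=s_3=1$. A group $G$ realizes $\langle n,p,m\rangle$ if there are subsets $S_1,S_2,S_3\subseteq G$ with $|S_1|=n$, $|S_2|=p$, $|S_3|=m$ satisfying the TPP; it does so via a TPP triple of subgroups if the $S_i$ can be chosen to be subgroups. For a nontrivial finite group $G$, $\beta(G):=\max\{npm : G \text{ realizes } \langle n,p,m\rangle\}$. Here $|\mathrm{SL}_3(\mathbb F_2)|=168$. *)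

(* Defs.v *)
From HB Require Import structures.
From mathcomp Require Import all_boot all_order all_algebra all_fingroup.
Set Implicit Arguments. Unset Strict Implicit. Unset Printing Implicit Defensive.
Import GRing.Theory.

Local Open Scope group_scope.

Definition Qset (gT : finGroupType) (X : {set gT}) : {set gT} :=
  [set x * y^-1 | x in X, y in X].

Definition TPP (gT : finGroupType) (S1 S2 S3 : {set gT}) : bool :=
  [&& S1 != set0, S2 != set0, S3 != set0 &
   [forall s1 in Qset S1, forall s2 in Qset S2, forall s3 in Qset S3,
     (s1 * s2 * s3 == 1) == [&& s1 == 1, s2 == 1 & s3 == 1]]].

Definition realizes (gT : finGroupType) (G : {set gT}) (n p m : nat) : Prop :=
  exists S1 S2 S3 : {set gT},
    [/\ S1 \subset G, S2 \subset G, S3 \subset G,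
        [/\ #|S1| = n, #|S2| = p & #|S3| = m] & TPP S1 S2 S3].

Definition realizes_subgroups (gT : finGroupType) (G : {set gT}) (n p m : nat)
  : Prop :=
  exists H1 H2 H3 : {group gT},
    [/\ H1 \subset G, H2 \subset G, H3 \subset G,
        [/\ #|H1| = n, #|H2| = p & #|H3| = m] & TPP H1 H2 H3].

Definition beta (gT : finGroupType) (G : {set gT}) : nat :=
  \max_(T : {set gT} * {set gT} * {set gT} |
          [&& T.1.1 \subset G, T.1.2 \subset G, T.2 \subset G &
              TPP T.1.1 T.1.2 T.2])
     (#|T.1.1| * #|T.1.2| * #|T.2|)%N.

Definition SL (n : nat) (R : finComUnitRingType) : {set {'GL_n[R]}} :=
  [set g : {'GL_n[R]} | (\det (GLval g) == 1)%R].

Lemma SL_group_set (n : nat) (R : finComUnitRingType) : group_set (SL n R).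
Proof.
apply/group_setP; split; first by rewrite inE GL_1E det1.
move=> x y; rewrite !inE GL_MxE det_mulmx => /eqP -> /eqP ->.
by rewrite mulr1.
Qed.

Canonical SL_group (n : nat) (R : finComUnitRingType) := group (SL_group_set n R).

(* Main.v *)
Require Import Defs.
From mathcomp Require Import all_boot all_order all_algebra all_fingroup.
From mathcomp Require Import cyclic.
Set Implicit Arguments. Unset Strict Implicit. Unset Printing Implicit Defensive.
Import GRing.Theory.

Definition row3 := (bool * bool * bool)%type.
Definition code := (row3 * row3 * row3)%type.

Definition rent (r : row3) (j : nat) : bool :=
  let: (x, y, z) := r in match j with 0 => x | 1 => y | _ => z end.
Definition ent (c : code) (i j : nat) : bool :=
  let: (r0, r1, r2) := c in rent (match i with 0 => r0 | 1 => r1 | _ => r2 end) j.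
Definition mkc (f : nat -> nat -> bool) : code :=
  ((f 0 0, f 0 1, f 0 2), (f 1 0, f 1 1, f 1 2), (f 2 0, f 2 1, f 2 2)).
Definition mulc (c d : code) : code :=
  mkc (fun i j => odd (ent c i 0 * ent d 0 j + ent c i 1 * ent d 1 j
                       + ent c i 2 * ent d 2 j)%N).
Definition idc : code := ((true, false, false), (false, true, false), (false, false, true)).
Definition powc (c : code) n := iter n (mulc c) idc.


Lemma mkcE c : c = mkc (ent c).
Proof. by case: c => [[[[? ?] ?] [[? ?] ?]] [[? ?] ?]]. Qed.

Lemma ent_mkc f (i j : 'I_3) : ent (mkc f) i j = f i j.
Proof. by case: i => [[|[|[|i]]] Hi] //; case: j => [[|[|[|j]]] Hj]. Qed.

Local Open Scope ring_scope.
Definition toM (c : code) : 'M['F_2]_3 := \matrix_(i, j) (ent c i j)%:R.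

Lemma F2_nat n : (n%:R : 'F_2) = (odd n)%:R.
Proof. by rewrite -(@Fp_nat_mod 2 isT n) modn2. Qed.

Lemma toM_mul c d : toM c *m toM d = toM (mulc c d).
Proof.
apply/matrixP => i j; rewrite [RHS]mxE ent_mkc !mxE !big_ord_recr big_ord0 /= !mxE add0r.
by rewrite -!natrM -!natrD F2_nat.
Qed.

Lemma toM_id : toM idc = 1%:M.
Proof.
by apply/matrixP => i j; rewrite !mxE; case: i => [[|[|[|i]]] Hi] //;
  case: j => [[|[|[|j]]] Hj].
Qed.

Lemma natb_inj (b b' : bool) : (b%:R : 'F_2) = b'%:R -> b = b'.
Proof. by case: b; case: b' => // /eqP; rewrite ?oner_eq0 // eq_sym oner_eq0. Qed.

Lemma toM_inj c d : toM c = toM d -> c = d.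
Proof.
move/matrixP => H.
have E (i j : nat) : (i < 3)%N -> (j < 3)%N -> ent c i j = ent d i j.
  move=> Hi Hj; apply: natb_inj.
  by have := H (Ordinal Hi) (Ordinal Hj); rewrite !mxE.
by rewrite (mkcE c) (mkcE d) /mkc !E.
Qed.

Local Open Scope group_scope.
Notation GL3 := {'GL_3['F_2]}.

Lemma GL_eq (g h : GL3) : GLval g = GLval h -> g = h.
Proof. exact: val_inj. Qed.

Definition Gc : code -> GL3 := locked (fun c => insubd (1 : GL3) (toM c)).
Lemma GcU c : Gc c = insubd (1 : GL3) (toM c).
Proof. by rewrite /Gc -lock. Qed.

Lemma toM_unit c d : mulc c d = idc -> toM c \in unitmx.
Proof.
move=> H; have := @mulmx1_unit _ _ (toM c) (toM d).
by rewrite toM_mul H toM_id => /(_ erefl) [U _]; exact: U.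
Qed.

Lemma GcE c d : mulc c d = idc -> GLval (Gc c) = toM c.
Proof.
move=> H; rewrite GcU; apply: (insubdK (1 : GL3)).
exact: (toM_unit H).
Qed.

Lemma GcM c c' d d' : mulc c d = idc -> mulc c' d' = idc ->
  GLval (Gc c * Gc c') = toM (mulc c c').
Proof. by move=> H H'; rewrite GL_MxE (GcE H) (GcE H') toM_mul. Qed.

Lemma GcX c d n : mulc c d = idc -> GLval (Gc c ^+ n) = toM (powc c n).
Proof.
move=> H; elim: n => [|n IH]; first by rewrite expg0 GL_1E toM_id.
by rewrite expgS GL_MxE IH (GcE H) toM_mul.
Qed.

Lemma eq1_code (g : GL3) c : GLval g = toM c -> (g == 1) = (c == idc).
Proof.
move=> Hg; apply/eqP/eqP => [g1|Ec].
  by apply: toM_inj; rewrite -Hg g1 GL_1E toM_id.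
by apply: val_inj; rewrite /= Hg Ec toM_id.
Qed.

Definition ac : code := ((false, false, true), (false, true, true), (true, true, false)).
Definition bc : code := ((false, false, true), (true, true, false), (false, true, true)).
Definition uc (t : row3) : code :=
  let: (x, y, z) := t in ((true, x, y), (false, true, z), (false, false, true)).
Definition uinv (t : row3) : row3 :=
  let: (x, y, z) := t in (x, addb (x && z) y, z).
Definition umul (t t' : row3) : row3 :=
  let: (x, y, z) := t in let: (x', y', z') := t' in
  (addb x x', addb (addb y y') (x && z'), addb z z').

Lemma uc_inv t : mulc (uc t) (uc (uinv t)) = idc.
Proof. by case: t => [[[] []] []]. Qed.

Lemma uc_mul t t' : mulc (uc t) (uc t') = uc (umul t t').
Proof. by case: t => [[[] []] []]; case: t' => [[[] []] []]. Qed.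

Lemma ac_inv : mulc ac (powc ac 6) = idc. Proof. by vm_compute. Qed.
Lemma bc_inv : mulc bc (powc bc 6) = idc. Proof. by vm_compute. Qed.

Definition U1 : {set GL3} := [set Gc (uc t) | t : row3].

Lemma U1_group : group_set U1.
Proof.
apply/group_setP; split.
  apply/imsetP; exists (false, false, false) => //.
  by apply: GL_eq; rewrite (GcE (uc_inv (false,false,false))) GL_1E toM_id.
move=> _ _ /imsetP[t _ ->] /imsetP[t' _ ->]; apply/imsetP; exists (umul t t') => //.
by apply: GL_eq; rewrite (GcM (uc_inv t) (uc_inv t')) (GcE (uc_inv _)) uc_mul.
Qed.

Lemma card_U1 : #|U1| = 8%N.
Proof.
rewrite card_imset ?cardsT ?card_prod ?card_bool //.
move=> t t' /(congr1 GLval); rewrite (GcE (uc_inv t)) (GcE (uc_inv t')) => /toM_inj.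
by case: t => [[[] []] []]; case: t' => [[[] []] []].
Qed.

Lemma order7 c : mulc c (powc c 6) = idc -> c != idc -> powc c 7 = idc ->
  #[Gc c] = 7%N.
Proof.
move=> Hi Hn H7.
have n1 : #[Gc c] != 1%N by rewrite order_eq1 (eq1_code (GcE Hi)).
apply/(@prime_nt_dvdP _ 7 isT n1).
by rewrite order_dvdn (eq1_code (GcX _ Hi)) H7.
Qed.

Lemma oA : #[Gc ac] = 7%N. Proof. by apply: order7 (ac_inv) _ _; vm_compute. Qed.
Lemma oB : #[Gc bc] = 7%N. Proof. by apply: order7 (bc_inv) _ _; vm_compute. Qed.

Lemma SLT : SL 3 'F_2 = [set: GL3].
Proof.
apply/setP => g; rewrite !inE; have := GL_det g.
by case: (\det (GLval g)) => [[|[|m]] Hm].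
Qed.

Lemma card_SL : #|SL 3 'F_2| = 168%N.
Proof.
rewrite SLT.
have -> : #|[set: GL3]| = #|'GL_3['F_2]| by [].
rewrite (@card_GL 'F_2 3 isT) (@card_Fp 2 isT).
by rewrite big_ltn // big_ltn // big_ltn // big_geq.
Qed.

Lemma QsetG (gT : finGroupType) (H : {group gT}) : Qset H = H.
Proof.
apply/setP => x; apply/idP/idP => [/imset2P[y z Hy Hz ->]|Hx].
  by rewrite groupM ?groupV.
by apply/imset2P; exists x 1; rewrite ?group1 ?invg1 ?mulg1.
Qed.

Definition Pchk (t : row3) (i j : nat) : bool :=
  (mulc (mulc (uc t) (powc ac i)) (powc bc j) == idc) ==
  [&& uc t == idc, powc ac i == idc & powc bc j == idc].

Definition all_row3 : seq row3 :=
  [:: (true,true,true); (true,true,false); (true,false,true); (true,false,false);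
      (false,true,true); (false,true,false); (false,false,true); (false,false,false)].

Lemma chk : all (fun t => all (fun i => all (fun j => Pchk t i j) (iota 0 7)) (iota 0 7)) all_row3.
Proof. by vm_compute. Qed.

Lemma chkP t i j : (i < 7)%N -> (j < 7)%N -> Pchk t i j.
Proof.
move=> Hi Hj; move/allP: chk => /(_ t).
have -> : t \in all_row3 by case: t => [[[] []] []].
move=> /(_ isT) /allP /(_ i); rewrite mem_iota Hi => /(_ isT) /allP /(_ j).
by rewrite mem_iota Hj => /(_ isT).
Qed.

Definition U1G := Group U1_group.

Lemma tpp : TPP U1G <[Gc ac]> <[Gc bc]>.
Proof.
rewrite /TPP !QsetG; apply/and4P; split; try by apply/set0Pn; exists 1; rewrite group1.
apply/forall_inP => s1 /imsetP[t _ ->].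
apply/forall_inP => _ /cycleP[i ->]; rewrite -[Gc ac ^+ i]expg_mod_order oA.
apply/forall_inP => _ /cycleP[j ->]; rewrite -[Gc bc ^+ j]expg_mod_order oB.
have Hi : (i %% 7 < 7)%N by rewrite ltn_pmod.
have Hj : (j %% 7 < 7)%N by rewrite ltn_pmod.
move: (i %% 7)%N (j %% 7)%N Hi Hj => {i j} i j Hi Hj.
have E : GLval (Gc (uc t) * Gc ac ^+ i * Gc bc ^+ j) =
         toM (mulc (mulc (uc t) (powc ac i)) (powc bc j)).
  by rewrite !GL_MxE (GcE (uc_inv t)) (GcX _ ac_inv) (GcX _ bc_inv) !toM_mul.
rewrite (eq1_code E) (eq1_code (GcE (uc_inv t))) (eq1_code (GcX _ ac_inv)).
by rewrite (eq1_code (GcX _ bc_inv)); apply: chkP.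
Qed.

Theorem mainTheorem7 :
  realizes_subgroups (SL 3 'F_2) 8 7 7 /\
  (392 <= beta (SL 3 'F_2))%N /\ (3 * 392 = 7 * #|SL 3 'F_2|)%N.
Proof.
have c2 : #|<[Gc ac]>| = 7%N by rewrite -orderE oA.
have c3 : #|<[Gc bc]>| = 7%N by rewrite -orderE oB.
split.
  exists U1G, <[Gc ac]>%G, <[Gc bc]>%G; split; rewrite ?SLT ?subsetT //.
    by split; rewrite ?card_U1.
  exact: tpp.
split; last by rewrite card_SL.
rewrite /beta.
apply: (leq_trans _ (leq_bigmax_cond
  ((U1G : {set GL3}), (<[Gc ac]> : {set GL3}), (<[Gc bc]> : {set GL3})) _)).
  by rewrite /= card_U1 c2 c3.
by rewrite /= SLT !subsetT tpp.
Qed.
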